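(* Let $(\mathcal A,\mathcal T,(-))$ be a meta-tangible $\mathcal T$-group module triple. Then the relation $\preceq_\circ$ on $\mathcal A$ defined by $b\preceq_\circ b'$ iff $b'=b+c^\circ$ for some $c\in\mathcal A$ is a $\mathcal T$-surpassing relation, and $(\mathcal A,\mathcal T,(-),\preceq_\circ)$ is a (meta-tangible) $\mathcal T$-system.
   Context: $(\mathcal A,+,\mathbb 0)$ commutative monoid, $\mathcal T\subseteq\mathcal A\setminus\{\mathbb 0\}$. A negation map is $(-):\mathcal A\to\mathcal A$ with $(-)(b_1+b_2)=(-)b_1+(-)b_2$, $(-)((-)b)=b$, $(-)\mathbb 0=\mathbb 0$, $(-)\mathcal T\subseteq\mathcal T$. Write $b(-)c:=b+((-)c)$, $b^\circ:=b(-)b$, $\mathcal A^\circ=\{b^\circ:b\in\mathcal A\}$. A $\mathcal T$-triple $(\mathcal A,\mathcal T,(-))$: such data with an action $\mathcal T\times\mathcal A\to\mathcal A$ satisfying $a(b_1+b_2)=ab_1+ab_2$, $a\mathbb 0=\mathbb 0$, $(-)(ab)=((-)a)b=a((-)b)$, with $\mathcal T\cap\mathcal A^\circ=\emptyset$ and every element of $\mathcal A$ a finite sum of elements of $\mathcal T$. It is a $\mathcal T$-group module triple if moreover $\mathcal T$ is a group with identity $\mathbb 1$ whose multiplication is the restriction of the action, $\mathbb 1b=b$ and $(a_1a_2)b=a_1(a_2b)$. Meta-tangible: $a+b\in\mathcal T$ for all $a,b\in\mathcal T$ with $b\neq(-)a$. A $\mathcal T$-surpassing relation $\preceq$ is a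 reflexive transitive relation on $\mathcal A$ with: (i) $b\preceq b+c^\circ$ for all $b,c$; (ii) $b_1\preceq b_2\Rightarrow(-)b_1\preceq(-)b_2$; (iii) $b_1\preceq b_2,\ b_1'\preceq b_2'\Rightarrow b_1+b_1'\preceq b_2+b_2'$; (iv) $a\in\mathcal T$, $b_1\preceq b_2\Rightarrow ab_1\preceq ab_2$; (v) $a\preceq b$ with $a,b\in\mathcal T$ implies $a=b$; (vi) $b^\circ\not\preceq a$ for all $b\in\mathcal A$, $a\in\mathcal T$. A $\mathcal T$-system is $(\mathcal A,\mathcal T,(-),\preceq)$ with $(\mathcal A,\mathcal T,(-))$ a $\mathcal T$-triple, $\preceq$ a $\mathcal T$-surpassing relation, and such that $\mathbb 0\preceq a+b$ with $a,b\in\mathcal T$ implies $b=(-)a$. *)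

(* Defs.v *)
From Stdlib Require Import List.
Import ListNotations.

Section TDefs.
Context {A : Type} (add : A -> A -> A) (zero : A) (T : A -> Prop)
        (neg : A -> A) (act : A -> A -> A).

Definition circ (b : A) : A := add b (neg b).

Definition lsum (l : list A) : A := fold_right add zero l.

Definition is_comm_monoid : Prop :=
  (forall x y z, add x (add y z) = add (add x y) z) /\
  (forall x y, add x y = add y x) /\
  (forall x, add zero x = x).

Definition is_negation_map : Prop :=
  (forall b1 b2, neg (add b1 b2) = add (neg b1) (neg b2)) /\
  (forall b, neg (neg b) = b) /\
  neg zero = zero /\
  (forall a, T a -> T (neg a)).

(* (A, T, (-)) is a T-triple, with action T x A -> A given by act
   (only its values act a b with T a matter). *)
Definition is_T_triple : Prop :=
  is_comm_monoid /\
  ~ T zero /\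
  is_negation_map /\
  (forall a b1 b2, T a -> act a (add b1 b2) = add (act a b1) (act a b2)) /\
  (forall a, T a -> act a zero = zero) /\
  (forall a b, T a -> neg (act a b) = act (neg a) b /\ act (neg a) b = act a (neg b)) /\
  (forall b, ~ T (circ b)) /\
  (forall b, exists l : list A, Forall T l /\ b = lsum l).

Definition is_T_group_module_triple : Prop :=
  is_T_triple /\
  exists one : A,
    T one /\
    (forall a1 a2, T a1 -> T a2 -> T (act a1 a2)) /\
    (forall a, T a -> act a one = a) /\
    (forall a, T a -> exists a', T a' /\ act a a' = one /\ act a' a = one) /\
    (forall b, act one b = b) /\
    (forall a1 a2 b, T a1 -> T a2 -> act (act a1 a2) b = act a1 (act a2 b)).

Definition meta_tangible : Prop :=
  forall a b, T a -> T b -> b <> neg a -> T (add a b).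

Definition is_T_surpassing (R : A -> A -> Prop) : Prop :=
  (forall b, R b b) /\
  (forall b1 b2 b3, R b1 b2 -> R b2 b3 -> R b1 b3) /\
  (forall b c, R b (add b (circ c))) /\
  (forall b1 b2, R b1 b2 -> R (neg b1) (neg b2)) /\
  (forall b1 b2 b1' b2', R b1 b2 -> R b1' b2' -> R (add b1 b1') (add b2 b2')) /\
  (forall a b1 b2, T a -> R b1 b2 -> R (act a b1) (act a b2)) /\
  (forall a b, T a -> T b -> R a b -> a = b) /\
  (forall b a, T a -> ~ R (circ b) a).

Definition is_T_system (R : A -> A -> Prop) : Prop :=
  is_T_triple /\ is_T_surpassing R /\
  (forall a b, T a -> T b -> R zero (add a b) -> b = neg a).

Definition circ_rel (b b' : A) : Prop := exists c, b' = add b (circ c).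

End TDefs.

(* Main.v *)
Require Import Defs.
From Stdlib Require Import Classical.

Section H.
Context {A : Type} (add : A -> A -> A) (zero : A) (neg : A -> A).
Hypothesis assoc : forall x y z, add x (add y z) = add (add x y) z.
Hypothesis comm : forall x y, add x y = add y x.
Hypothesis zl : forall x, add zero x = x.

Lemma swap4 x y z w : add (add x y) (add z w) = add (add x z) (add y w).
Proof.
  rewrite <- !assoc. f_equal. rewrite !assoc. f_equal. apply comm.
Qed.
End H.

Theorem theorem7p35 (A : Type) (add : A -> A -> A) (zero : A) (T : A -> Prop)
    (neg : A -> A) (act : A -> A -> A) :
  is_T_group_module_triple add zero T neg act ->
  meta_tangible add T neg ->
  is_T_surpassing add T neg act (circ_rel add neg) /\
  is_T_system add zero T neg act (circ_rel add neg) /\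
  meta_tangible add T neg.
Proof.
  intros [Htr _] Hmt.
  pose proof Htr as Htr'.
  destruct Htr as [[assoc [comm zl]] [nT0 [[nadd [nn [n0 nT]]] [actD [act0 [actn [nTc _]]]]]]].
  assert (z0 : forall x, add x zero = x) by (intros; rewrite comm; apply zl).
  assert (cD : forall x y, circ add neg (add x y) = add (circ add neg x) (circ add neg y)).
  { intros; unfold circ; rewrite nadd; apply (swap4 add assoc comm). }
  assert (Sur : is_T_surpassing add T neg act (circ_rel add neg)).
  { unfold is_T_surpassing, circ_rel. repeat split.
    - intros b; exists zero; unfold circ; rewrite n0, zl, z0; reflexivity.
    - intros b1 b2 b3 [c Hc] [d Hd]; exists (add c d); subst.
      rewrite cD, assoc; reflexivity.
    - intros b c; exists c; reflexivity.
    - intros b1 b2 [c Hc]; exists c; subst. rewrite nadd. f_equal.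
      unfold circ; rewrite nadd, nn; apply comm.
    - intros b1 b2 b1' b2' [c Hc] [d Hd]; exists (add c d); subst.
      rewrite cD; apply (swap4 add assoc comm).
    - intros a b1 b2 Ha [c Hc]; exists (act a c); subst.
      rewrite actD by exact Ha. f_equal. unfold circ.
      rewrite actD by exact Ha. f_equal.
      destruct (actn a c Ha) as [E1 E2]. rewrite E1, E2. reflexivity.
    - intros a b Ha Hb [c Hc].
      destruct (classic (a = b)) as [E|NE]; [exact E|exfalso].
      assert (Hn : neg a <> neg b).
      { intro E; apply NE; rewrite <- (nn a), <- (nn b), E; reflexivity. }
      pose proof (Hmt b (neg a) Hb (nT a Ha) Hn) as HT.
      apply (nTc (add a c)). rewrite cD.
      replace (circ add neg a) with (add a (neg a)) by reflexivity.
      rewrite Hc in HT. rewrite <- assoc in HT.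
      rewrite (comm (circ add neg c) (neg a)) in HT. rewrite assoc in HT.
      exact HT.
    - intros b a Ha [c Hc]. apply (nTc (add b c)). rewrite cD, <- Hc. exact Ha. }
  split; [exact Sur|]. split; [|exact Hmt].
  split; [exact Htr'|]. split; [exact Sur|].
  intros a b Ha Hb [c Hc].
  destruct (classic (b = neg a)) as [E|NE]; [exact E|exfalso].
  apply (nTc c). rewrite zl in Hc. rewrite <- Hc.
  apply Hmt; auto.
Qed.
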